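(* Let $n\ge3$ and $k\ge2$ be integers, and let $A=\mathrm{pdiag}(a_1,\dots,a_n)$ with $0\le a_1\le\dots\le a_n$. If there exists $i$ with $2\le i\le n-1$ such that $$a_i>\frac{\max\{(k-2)a_n,\ k a_1\}}{k-1},$$ then $D=A^k$ (which has the $k$-th root $A$) does not satisfy the root condition; that is, there exist $i',j',t\in[n]$ with $D_{i'j'}+D_{tt}<D_{i't}+D_{tj'}$.
   Context: Max-plus conventions: $\oplus=\max$, $\otimes=+$; $(A\otimes B)_{ij}=\max_t(A_{it}+B_{tj})$, $A^k$ is the $k$-fold max-plus power. $\mathrm{pdiag}(a_1,\dots,a_n)$ is the matrix with real diagonal entries $a_1,\dots,a_n$ and all off-diagonal entries equal to the real number $0$. A finite matrix $M\in\mathbb{R}^{n\times n}$ satisfies the root condition if $M_{ij}+M_{tt}\ge M_{it}+M_{tj}$ for all $i,j,t\in[n]$. *)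

(* Defs.v *)
From mathcomp Require Import all_boot all_order all_algebra.
Set Implicit Arguments. Unset Strict Implicit. Unset Printing Implicit Defensive.
Import Order.TTheory GRing.Theory Num.Theory.
Local Open Scope ring_scope.

Definition mpmx (R : realFieldType) (n : nat) := 'I_n -> 'I_n -> R.

Definition seqmax (R : realFieldType) (x0 : R) (s : seq R) : R :=
  foldr Num.max x0 s.

(* Max-plus product: (A (x) B)_ij = max_t (A_it + B_tj).  For n = 0 there are
   no entries, so the default value is irrelevant. *)
Definition mp_mul (R : realFieldType) (n : nat) (A B : mpmx R n) : mpmx R n :=
  fun i j => seqmax (A i i + B i j) [seq A i t + B t j | t <- enum 'I_n].

Fixpoint mp_pow (R : realFieldType) (n : nat) (A : mpmx R n) (k : nat) : mpmx R n :=
  match k with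
  | 0 => A  (* not used: the statement only involves k >= 2 *)
  | 1 => A
  | k'.+1 => mp_mul (mp_pow A k') A
  end.

Definition pdiag (R : realFieldType) (n : nat) (a : 'I_n -> R) : mpmx R n :=
  fun i j => if i == j then a i else 0.

Definition root_condition (R : realFieldType) (n : nat) (M : mpmx R n) : Prop :=
  forall i j t : 'I_n, M i t + M t j <= M i j + M t t.

(* Main.v *)
Require Import Defs.
From mathcomp Require Import all_boot all_order all_algebra.
From mathcomp Require Import lra zify.
Import Order.TTheory GRing.Theory Num.Theory.
Local Open Scope ring_scope.

Section Aux.
Variable R : realFieldType.

Lemma seqmax_ge (x0 x : R) s : x \in x0 :: s -> x <= seqmax x0 s.
Proof.
elim: s x => [|y s IH] x.
  by rewrite inE => /eqP ->.
have -> : seqmax x0 (y :: s) = Num.max y (seqmax x0 s) by [].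
rewrite !inE => /or3P [/eqP->|/eqP->|hx]; rewrite le_max.
- by apply/orP; right; apply: IH; rewrite inE eqxx.
- by rewrite lexx.
- by apply/orP; right; apply: IH; rewrite inE hx orbT.
Qed.

Lemma seqmax_le (x0 c : R) s : x0 <= c -> (forall x, x \in s -> x <= c) ->
  seqmax x0 s <= c.
Proof.
move=> h0; elim: s => [|y s IH] hs //.
have -> : seqmax x0 (y :: s) = Num.max y (seqmax x0 s) by [].
rewrite ge_max hs ?inE ?eqxx //=.
by apply: IH => x hx; apply: hs; rewrite inE hx orbT.
Qed.

Variable n : nat.

Lemma mp_mul_ge (A B : mpmx R n) i j t : A i t + B t j <= mp_mul A B i j.
Proof.
apply: seqmax_ge; rewrite inE; apply/orP; right.
by apply: (map_f (fun t => A i t + B t j)); rewrite mem_enum.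
Qed.

Lemma mp_mul_le (A B : mpmx R n) i j c :
  (forall t, A i t + B t j <= c) -> mp_mul A B i j <= c.
Proof.
move=> h; apply: seqmax_le => // x /mapP [t _ ->]; exact: h.
Qed.

Variable a : 'I_n -> R.
Let P m := mp_pow (pdiag a) m.+1.

Lemma PS m : P m.+1 = mp_mul (P m) (pdiag a).
Proof. by []. Qed.

Lemma P0 : P 0 = pdiag a.
Proof. by []. Qed.

Lemma ub z (h0 : forall t, 0 <= a t) (hz : forall t, a t <= z) m i j :
  P m i j <= m%:R * z + (if i == j then a i else 0).
Proof.
elim: m i j => [|m IH] i j.
  by rewrite P0 /pdiag mul0r add0r.
rewrite PS; apply: mp_mul_le => t; rewrite /pdiag.
have := IH i t; have := hz j; have := hz i; have := h0 i; rewrite -natr1.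
case: (eqVneq t j) => [->|htj].
  case: (i == j); lra.
case: (eqVneq i t) => [eit|nit].
  rewrite -eit in htj; rewrite (negbTE htj); lra.
case: (i == j); lra.
Qed.

Lemma ub_diag z (h0 : forall t, 0 <= a t) (hz : forall t, a t <= z) m i c :
  m.+1%:R * a i <= c -> (m%:R - 1) * z <= c -> P m i i <= c.
Proof.
elim: m c => [|m IH] c.
  by rewrite P0 /pdiag eqxx mul1r.
move=> h1 h2; rewrite PS; apply: mp_mul_le => t; rewrite /pdiag.
case: (eqVneq t i) => [->|hti].
  suff : P m i i <= c - a i by lra.
  apply: IH; move: h1 h2 (hz i); rewrite -!natr1; lra.
have := @ub z h0 hz m i t; rewrite eq_sym (negbTE hti) => h.
move: h1 h2; rewrite -natr1 => h1 h2; lra.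
Qed.

Lemma lb_diag m i : m.+1%:R * a i <= P m i i.
Proof.
elim: m => [|m IH]; first by rewrite P0 /pdiag eqxx mul1r.
rewrite PS; apply: le_trans (mp_mul_ge _ _ _ _ i).
rewrite /pdiag eqxx -natr1; lra.
Qed.

Lemma lb_off m i j : i != j -> m%:R * a i <= P m i j /\ m%:R * a j <= P m i j.
Proof.
move=> hij; elim: m => [|m [IH1 IH2]].
  by rewrite P0 /pdiag (negbTE hij) !mul0r.
rewrite PS; split.
  apply: le_trans (mp_mul_ge _ _ _ _ i).
  rewrite /pdiag (negbTE hij) addr0; exact: lb_diag.
apply: le_trans (mp_mul_ge _ _ _ _ j).
rewrite /pdiag eqxx -natr1; lra.
Qed.

End Aux.

Theorem proposition4p11 (R : realFieldType) (n k : nat) (a : 'I_n -> R) :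
  (3 <= n)%N -> (2 <= k)%N ->
  (forall i : 'I_n, 0 <= a i) ->
  (forall i j : 'I_n, (i <= j)%N -> a i <= a j) ->
  (exists (i : 'I_n) (i1 iN : 'I_n),
      val i1 = 0%N /\ val iN = n.-1 /\
      (1 <= i)%N /\ (i <= n - 2)%N /\
      a i > Num.max ((k - 2)%:R * a iN) (k%:R * a i1) / (k - 1)%:R) ->
  exists i' j' t : 'I_n,
    mp_pow (pdiag a) k i' j' + mp_pow (pdiag a) k t t
      < mp_pow (pdiag a) k i' t + mp_pow (pdiag a) k t j'.
Proof.
move=> hn hk h0 hmono [i [i1 [iN [h1 [hN [hi1 [hi2 hlt]]]]]]].
case: k hk hlt => [|m] // hm hlt.
have hz : forall t : 'I_n, a t <= a iN.
  move=> t; apply: hmono; rewrite hN; have := ltn_ord t; rewrite /=; lia.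
have ne_i1 : i != i1 by apply/eqP => /(congr1 (@nat_of_ord n)); rewrite h1; lia.
have ne_iN : i != iN by apply/eqP => /(congr1 (@nat_of_ord n)); rewrite hN; lia.
have ne_1N : i1 != iN by apply/eqP => /(congr1 (@nat_of_ord n)); rewrite h1 hN; lia.
have mpos : (0 : R) < m%:R by rewrite ltr0n; lia.
have e1 : (m.+1 - 1)%N = m by lia.
have e2 : ((m.+1 - 2)%N%:R : R) = m%:R - 1.
  have -> : m = (m - 1).+1 by lia.
  by rewrite subSS -natr1 addrK subn1.
rewrite e1 e2 ltr_pdivrMr // in hlt.
exists i, iN, i1.
have A1 := @ub R n a (a iN) h0 hz m i iN; rewrite (negbTE ne_iN) addr0 in A1.
have A2 : mp_pow (pdiag a) m.+1 i1 i1 <=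
   Num.max ((m%:R - 1) * a iN) (m.+1%:R * a i1).
  by apply: ub_diag => //; rewrite le_max lexx ?orbT.
have [A3 _] := @lb_off R n a m _ _ ne_i1.
have [_ A4] := @lb_off R n a m _ _ ne_1N.
move: A1 A2 A3 A4 hlt.
set M := Num.max _ _; lra.
Qed.
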